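(* There exists $\delta_0>0$ such that for every $0\le \delta<\delta_0$ the following holds: there exists $\varepsilon=\varepsilon(\delta)>0$ such that for every Boolean function $f:\{0,1\}^n\to\{0,1\}$ (any $n$) there exists a $\delta$-noisy circuit $C$ composed of 3MIN gates with $n$ inputs such that for all $(x_1,\dots,x_n)\in\{0,1\}^n$, $\mathbb{P}(C(x_1,\dots,x_n)\neq f(x_1,\dots,x_n))\le\frac12-\varepsilon$. That is, provided $\delta$ is sufficiently small, any Boolean function can be reliably computed by a $\delta$-noisy circuit composed of 3-input minority gates.
   Context: A Boolean circuit is a directed acyclic graph whose source nodes are either input variables $x_1,\dots,x_n$ or constants $0$ or $1$ (constants are noiseless), whose other vertices are logic gates computing a Boolean function of their incoming edges and sending the result along all outgoing edges, and which has a single sink, the output. A 3MIN (3-input minority) gate outputs $1$ if at most one of its three inputs equals $1$, and $0$ otherwise (the negation of majority). A gate is $\delta$-noisy if, given its inputs, it outputs the wrong value with probability $\delta$; a $\delta$-noisy circuit has all gates $\delta$-noisy, malfunctioning independently. *)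

(* Defs.v *)
From HB Require Import structures.
From mathcomp Require Import all_boot all_order all_algebra.
From mathcomp Require Import reals.
Set Implicit Arguments. Unset Strict Implicit. Unset Printing Implicit Defensive.
Import Order.TTheory GRing.Theory Num.Theory.
Local Open Scope ring_scope.

(* A wire feeding a gate: an input variable x_i (i < n), a noiseless
   constant, or the output of an earlier gate (index in topological order). *)
Inductive wire (n : nat) : Type :=
  | WIn of 'I_n
  | WConst of bool
  | WGate of nat.

(* A 3MIN circuit with n inputs: a list of gates in topological order,
   each given by its three input wires.  The output is the last gate. *)
Definition circuit (n : nat) := seq (wire n * wire n * wire n).

Definition min3 (a b c : bool) : bool := (a + b + c <= 1)%N.

Definition wire_ok n (k : nat) (w : wire n) : bool :=
  match w with WGate j => (j < k)%N | _ => true end.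

Fixpoint wf_from n (k : nat) (gs : circuit n) : bool :=
  match gs with
  | [::] => true
  | (a, b, c) :: gs' =>
      [&& wire_ok k a, wire_ok k b, wire_ok k c & wf_from k.+1 gs']
  end.

Definition circuit_wf n (C : circuit n) : bool := (0 < size C)%N && wf_from 0 C.

Definition wire_val n (x : n.-tuple bool) (vals : seq bool) (w : wire n) : bool :=
  match w with
  | WIn i => tnth x i
  | WConst b => b
  | WGate j => nth false vals j
  end.

(* Run the circuit on input x with fault pattern z (z k = true means gate k
   outputs the wrong value); returns the values of all gates. *)
Fixpoint run n (x : n.-tuple bool) (z : nat -> bool) (gs : circuit n)
  (vals : seq bool) : seq bool :=
  match gs with
  | [::] => vals
  | (a, b, c) :: gs' =>
      run x z gs'
        (rcons vals
           (min3 (wire_val x vals a) (wire_val x vals b) (wire_val x vals c)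
              (+) z (size vals)))
  end.

Definition output n (C : circuit n) (x : n.-tuple bool) (z : nat -> bool) : bool :=
  last false (run x z C [::]).

Definition err_prob (R : realType) (delta : R) n (C : circuit n)
  (f : n.-tuple bool -> bool) (x : n.-tuple bool) : R :=
  \sum_(z : (size C).-tuple bool)
     (\prod_(i < size C) (if tnth z i then delta else 1 - delta)) *
     (output C x (fun k => nth false z k) != f x)%:R.

(* Main.v *)
Require Import Defs.
From HB Require Import structures.
From mathcomp Require Import all_boot all_order all_algebra.
From mathcomp Require Import reals.
From mathcomp Require Import zify ring lra.
Set Implicit Arguments. Unset Strict Implicit. Unset Printing Implicit Defensive.
Import Order.TTheory GRing.Theory Num.Theory.

Inductive tree (n : nat) : Type :=
  | TIn of 'I_n
  | TC of bool
  | Node of tree n & tree n & tree n.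

Fixpoint gates n (t : tree n) : nat :=
  match t with Node a b c => gates a + (gates b + (gates c + 1)) | _ => 0 end.

Fixpoint evalf n (t : tree n) (x : n.-tuple bool) (z : nat -> bool) : bool :=
  match t with
  | TIn i => tnth x i
  | TC b => b
  | Node a b c => min3 (evalf a x z) (evalf b x (fun k => z (gates a + k)))
                    (evalf c x (fun k => z (gates a + (gates b + k))))
                  (+) z (gates a + (gates b + gates c))
  end.

Fixpoint compc n (t : tree n) (off : nat) : circuit n * wire n :=
  match t with
  | TIn i => ([::], WIn i)
  | TC b => ([::], WConst n b)
  | Node a b c =>
    ((compc a off).1 ++ (compc b (off + gates a)).1 ++
       (compc c (off + gates a + gates b)).1 ++
       [:: ((compc a off).2, (compc b (off + gates a)).2,
            (compc c (off + gates a + gates b)).2)],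
     WGate n (off + gates a + gates b + gates c))
  end.

Lemma size_comp n (t : tree n) off : size (compc t off).1 = gates t.
Proof.
elim: t off => //= a IHa b IHb c IHc off.
by rewrite !size_cat IHa IHb IHc.
Qed.

Lemma wf_from_cat n k (g1 g2 : circuit n) :
  wf_from k (g1 ++ g2) = wf_from k g1 && wf_from (k + size g1) g2.
Proof.
elim: g1 k => [|[[a b] c] g1 IH] k /=; first by rewrite addn0.
by rewrite IH addSnnS !andbA.
Qed.

Lemma wire_ok_mono n k k' (w : wire n) : wire_ok k w -> (k <= k')%N -> wire_ok k' w.
Proof. by case: w => //= j; lia. Qed.

Lemma wf_comp n (t : tree n) off :
  wf_from off (compc t off).1 && wire_ok (off + gates t) (compc t off).2.
Proof.
elim: t off => //= a IHa b IHb c IHc off.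
move: (IHa off) (IHb (off + gates a)) (IHc (off + gates a + gates b)).
rewrite !wf_from_cat !size_comp /=.
move=> /andP[-> wa] /andP[-> wb] /andP[-> wc] /=.
rewrite !addnA !andbT.
apply/andP; split; last by lia.
apply/and3P; split.
- apply: wire_ok_mono wa _; lia.
- apply: wire_ok_mono wb _; lia.
- apply: wire_ok_mono wc _; lia.
Qed.

Lemma run_cat n x z (g1 g2 : circuit n) vals :
  run x z (g1 ++ g2) vals = run x z g2 (run x z g1 vals).
Proof. by elim: g1 vals => [|[[a b] c] g1 IH] vals //=. Qed.

Lemma wire_val_cat n x vals M (w : wire n) :
  wire_ok (size vals) w -> wire_val x (vals ++ M) w = wire_val x vals w.
Proof. by case: w => //= j Hj; rewrite nth_cat Hj. Qed.

Lemma evalf_ext n (t : tree n) x z z' :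
  (forall k, (k < gates t)%N -> z k = z' k) -> evalf t x z = evalf t x z'.
Proof.
elim: t z z' => //= a IHa b IHb c IHc z z' H.
rewrite (IHa z z'); last by move=> k Hk; apply: H; lia.
rewrite (IHb _ (fun k => z' (gates a + k))); last by move=> k Hk; apply: H; lia.
rewrite (IHc _ (fun k => z' (gates a + (gates b + k)))); last by move=> k Hk; apply: H; lia.
by rewrite H //; lia.
Qed.

Lemma run_comp n x z (t : tree n) off vals : size vals = off ->
  exists L, run x z (compc t off).1 vals = vals ++ L /\ size L = gates t /\
    wire_val x (vals ++ L) (compc t off).2 = evalf t x (fun k => z (off + k)).
Proof.
elim: t off vals => [i|bb|a IHa b IHb c IHc] off vals Hs.
- by exists [::]; rewrite cats0.
- by exists [::]; rewrite cats0.
have := wf_comp a off; have := wf_comp b (off + gates a);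
have := wf_comp c (off + gates a + gates b).
move=> /andP[_ wc] /andP[_ wb] /andP[_ wa].
have [La [Ra [Sa Va]]] := IHa off vals Hs.
have [Lb [Rb [Sb Vb]]] : exists L, _ := IHb (off + gates a) (vals ++ La)
  (etrans (size_cat _ _) (f_equal2 addn Hs Sa)).
have Hs2 : size ((vals ++ La) ++ Lb) = off + gates a + gates b.
  by rewrite !size_cat Hs Sa Sb.
have [Lc [Rc [Sc Vc]]] := IHc (off + gates a + gates b) ((vals ++ La) ++ Lb) Hs2.
rewrite /= !run_cat Ra Rb Rc /=.
set V := ((vals ++ La) ++ Lb) ++ Lc.
set bit := _ (+) _.
exists (La ++ Lb ++ Lc ++ [:: bit]); split.
  by rewrite -cats1 /V -!catA.
split; first by rewrite !size_cat Sa Sb Sc /=; lia.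
have HV : size V = off + gates a + gates b + gates c.
  by rewrite /V !size_cat Hs Sa Sb Sc; lia.
rewrite (_ : vals ++ _ = rcons V bit); last by rewrite -cats1 /V -!catA.
rewrite -HV nth_rcons ltnn eqxx /bit HV.
have E1 : wire_val x V (compc a off).2 = wire_val x (vals ++ La) (compc a off).2.
  by rewrite /V -catA wire_val_cat // size_cat Hs Sa.
have E2 : wire_val x V (compc b (off + gates a)).2 =
          wire_val x ((vals ++ La) ++ Lb) (compc b (off + gates a)).2.
  by rewrite /V wire_val_cat // !size_cat Hs Sa Sb.
rewrite E1 E2 /V Va Vb Vc.
congr (min3 _ _ _ (+) _).
- by apply: evalf_ext => k _; rewrite addnA.
- by apply: evalf_ext => k _; rewrite !addnA.
- by rewrite !addnA.
Qed.

Local Open Scope ring_scope.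


Fixpoint E (R : realType) (d : R) (m : nat) (F : seq bool -> R) : R :=
  match m with
  | 0%N => F [::]
  | m'.+1 => (1 - d) * E d m' (fun l => F (false :: l)) + d * E d m' (fun l => F (true :: l))
  end.

Lemma E_ext (R : realType) (d : R) m F G :
  (forall l, F l = G l) -> E d m F = E d m G.
Proof.
elim: m F G => [|m IH] F G H /=; first by rewrite H.
by congr (_ * _ + _ * _); apply: IH => l; apply: H.
Qed.

Lemma E_add (R : realType) (d : R) m F G :
  E d m (fun l => F l + G l) = E d m F + E d m G.
Proof.
elim: m F G => [|m IH] F G //=.
rewrite (IH (fun l => F (false :: l))) (IH (fun l => F (true :: l))); ring.
Qed.

Lemma E_scale (R : realType) (d : R) m c F :
  E d m (fun l => c * F l) = c * E d m F.
Proof.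
elim: m F => [|m IH] F //=.
rewrite (IH (fun l => F (false :: l))) (IH (fun l => F (true :: l))); ring.
Qed.

Lemma E_const (R : realType) (d : R) m c : E d m (fun _ => c) = c.
Proof. elim: m => [|m IH] //=; rewrite IH; ring. Qed.

Lemma E_mono (R : realType) (d : R) m F G : 0 <= d -> d <= 1 ->
  (forall l, F l <= G l) -> E d m F <= E d m G.
Proof.
move=> d0 d1; elim: m F G => [|m IH] F G H /=; first exact: H.
apply: lerD; apply: ler_wpM2l.
- lra.
- by apply: IH => l; apply: H.
- lra.
- by apply: IH => l; apply: H.
Qed.

Lemma E_cat (R : realType) (d : R) a b G H :
  E d (a + b) (fun l => G (take a l) * H (drop a l)) = E d a G * E d b H.
Proof.
elim: a G => [|a IH] G /=.
  rewrite (@E_ext _ _ _ _ (fun l => G [::] * H l)); last by move=> l; rewrite take0 drop0.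
  by rewrite E_scale.
rewrite (IH (fun l => G (false :: l))) (IH (fun l => G (true :: l))); ring.
Qed.

Lemma E4 (R : realType) (d : R) a b c e P1 P2 P3 P4 :
  E d (a + (b + (c + e))) (fun l => P1 (take a l) * P2 (take b (drop a l)) *
      P3 (take c (drop b (drop a l))) * P4 (drop c (drop b (drop a l)))) =
  E d a P1 * E d b P2 * E d c P3 * E d e P4.
Proof.
rewrite (@E_ext _ _ _ _ (fun l => P1 (take a l) * (fun l' => P2 (take b l') *
   (fun l'' => P3 (take c l'') * P4 (drop c l'')) (drop b l')) (drop a l))).
  rewrite (E_cat d a (b + (c + e)) P1 (fun l' => P2 (take b l') *
   (fun l'' => P3 (take c l'') * P4 (drop c l'')) (drop b l'))).
  rewrite (E_cat d b (c + e) P2 (fun l'' => P3 (take c l'') * P4 (drop c l''))).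
  by rewrite (E_cat d c e P3 P4) !mulrA.
by move=> l /=; rewrite !mulrA.
Qed.

Lemma E_bit (R : realType) (d : R) : E d 1 (fun l => (nth false l 0 : nat)%:R) = d.
Proof. rewrite /=; ring. Qed.

Lemma E_tuple (R : realType) (d : R) m (F : seq bool -> R) :
  \sum_(z : m.-tuple bool)
     (\prod_(i < m) (if tnth z i then d else 1 - d)) * F z = E d m F.
Proof.
elim: m F => [|m IH] F.
  rewrite (big_pred1 [tuple]) => [|t]; last by rewrite [t]tuple0 /= eqxx.
  by rewrite big_ord0 mul1r.
rewrite (reindex (fun p : bool * m.-tuple bool => [tuple of p.1 :: p.2])) /=; last first.
  exists (fun t : m.+1.-tuple bool => (thead t, [tuple of behead t])).
    move=> [b t] _; rewrite theadE; congr pair; exact: val_inj.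
  move=> t _; by rewrite [in RHS](tuple_eta t).
rewrite -(pair_bigA _ (fun b (t : m.-tuple bool) => 
   (\prod_(i < m.+1) (if tnth [tuple of b :: t] i then d else 1 - d)) * F (b :: t))) /=.
have Hb b : \sum_(t : m.-tuple bool) (\prod_(i < m.+1) (if tnth [tuple of b :: t] i then d else 1 - d)) * F (b :: t) = (if b then d else 1 - d) * E d m (fun l => F (b :: l)).
  rewrite -IH big_distrr; apply: eq_bigr => t _.
  rewrite big_ord_recl tnth0 -mulrA; congr (_ * (_ * _)).
  by apply: eq_bigr => i _; rewrite tnthS.
rewrite big_bool /= Hb Hb /=.
by rewrite addrC.
Qed.


Definition ideal n (t : tree n) x := evalf t x (fun _ => false).

Definition Pr (R : realType) (d : R) n (t : tree n) x :=
  E d (gates t) (fun l => ((evalf t x (nth false l) != ideal t x) : nat)%:R).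

Definition prod4 (R : realType) a b c (P1 P2 P3 P4 : seq bool -> R) (l : seq bool) :=
  P1 (take a l) * P2 (take b (drop a l)) * P3 (take c (drop b (drop a l))) *
  P4 (drop c (drop b (drop a l))).

Lemma E4p (R : realType) (d : R) a b c e P1 P2 P3 P4 :
  E d (a + (b + (c + e))) (prod4 a b c P1 P2 P3 P4) =
  E d a P1 * E d b P2 * E d c P3 * E d e P4.
Proof. exact: E4. Qed.

Lemma evalf_node n (a b c : tree n) x l :
  evalf (Node a b c) x (nth false l) =
  min3 (evalf a x (nth false (take (gates a) l)))
       (evalf b x (nth false (take (gates b) (drop (gates a) l))))
       (evalf c x (nth false (take (gates c) (drop (gates b) (drop (gates a) l)))))
  (+) nth false (drop (gates c) (drop (gates b) (drop (gates a) l))) 0.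
Proof.
rewrite /=; congr (min3 _ _ _ (+) _).
- by apply: evalf_ext => k Hk; rewrite nth_take.
- by apply: evalf_ext => k Hk; rewrite nth_take // nth_drop.
- by apply: evalf_ext => k Hk; rewrite nth_take // !nth_drop.
- by rewrite !nth_drop addn0.
Qed.

Lemma min3_err1 a1 a2 a3 v1 v2 v3 bt :
  ((min3 a1 a2 a3 (+) bt) != min3 v1 v2 v3 <= bt + (a1 != v1) + (a2 != v2) + (a3 != v3))%N.
Proof. by case: a1; case: a2; case: a3; case: v1; case: v2; case: v3; case: bt. Qed.

Lemma min3_err2 a1 a2 a3 v bt :
  ((min3 a1 a2 a3 (+) bt) != min3 v v v <=
    bt + (a1 != v) * (a2 != v) + (a1 != v) * (a3 != v) + (a2 != v) * (a3 != v))%N.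
Proof. by case: a1; case: a2; case: a3; case: v; case: bt. Qed.

Definition one (R : realType) := fun _ : seq bool => (1 : R).
Definition bitf (R : realType) := fun l : seq bool => ((nth false l 0 : nat)%:R : R).
Definition wf (R : realType) n (t : tree n) x :=
  fun l : seq bool => (((evalf t x (nth false l) != ideal t x) : nat)%:R : R).

Lemma Pr_node1 (R : realType) (d : R) n (a b c : tree n) x : 0 <= d -> d <= 1 ->
  Pr d (Node a b c) x <= d + Pr d a x + Pr d b x + Pr d c x.
Proof.
move=> d0 d1.
rewrite /Pr [gates (Node a b c)]/=.
set ga := gates a; set gb := gates b; set gc := gates c.
have H := (@E_mono R d (ga + (gb + (gc + 1))) (fun l => (((evalf (Node a b c) x (nth false l) != ideal (Node a b c) x) : nat)%:R : R)) (fun l =>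
   prod4 ga gb gc (@one R) (@one R) (@one R) (@bitf R) l +
   prod4 ga gb gc (@wf R _ a x) (@one R) (@one R) (@one R) l +
   prod4 ga gb gc (@one R) (@wf R _ b x) (@one R) (@one R) l +
   prod4 ga gb gc (@one R) (@one R) (@wf R _ c x) (@one R) l) d0 d1).
apply: le_trans (H _) _.
  move=> l; rewrite /prod4 /one /bitf /wf !mul1r !mulr1.
  rewrite (evalf_node a b c x l) -!natrD ler_nat.
  have -> : ideal (Node a b c) x = min3 (ideal a x) (ideal b x) (ideal c x).
    by rewrite /ideal /= addbF.
  exact: min3_err1.
rewrite !E_add !E4p !E_const E_bit /wf !mul1r !mulr1 /Pr.
by rewrite le_refl.
Qed.

Lemma Pr_node2 (R : realType) (d : R) n (a b c : tree n) x : 0 <= d -> d <= 1 ->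
  ideal b x = ideal a x -> ideal c x = ideal a x ->
  Pr d (Node a b c) x <= d + Pr d a x * Pr d b x + Pr d a x * Pr d c x + Pr d b x * Pr d c x.
Proof.
move=> d0 d1 eb ec.
rewrite /Pr [gates (Node a b c)]/=.
set ga := gates a; set gb := gates b; set gc := gates c.
have H := (@E_mono R d (ga + (gb + (gc + 1))) (fun l => (((evalf (Node a b c) x (nth false l) != ideal (Node a b c) x) : nat)%:R : R)) (fun l =>
   prod4 ga gb gc (@one R) (@one R) (@one R) (@bitf R) l +
   prod4 ga gb gc (@wf R _ a x) (@wf R _ b x) (@one R) (@one R) l +
   prod4 ga gb gc (@wf R _ a x) (@one R) (@wf R _ c x) (@one R) l +
   prod4 ga gb gc (@one R) (@wf R _ b x) (@wf R _ c x) (@one R) l) d0 d1).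
apply: le_trans (H _) _.
  move=> l; rewrite /prod4 /one /bitf /wf !mul1r !mulr1.
  rewrite (evalf_node a b c x l) eb ec -!natrM -!natrD ler_nat.
  have -> : ideal (Node a b c) x = min3 (ideal a x) (ideal a x) (ideal a x).
    by rewrite -{2}eb -{2}ec /ideal /= addbF.
  exact: min3_err2.
rewrite !E_add !E4p !E_const E_bit /wf !mul1r !mulr1 /Pr.
by rewrite le_refl.
Qed.


Definition rn n (A B : tree n) :=
  let N := Node A B (TC n false) in let M := Node N N N in Node M M M.

Lemma ideal_rn n (A B : tree n) x : ideal (rn A B) x = ~~ (ideal A x && ideal B x).
Proof.
rewrite /rn /ideal /=.
by case: (evalf A x _); case: (evalf B x _).
Qed.

Lemma Pr_ge0 (R : realType) (d : R) n (t : tree n) x : 0 <= d -> d <= 1 -> 0 <= Pr d t x.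
Proof.
move=> d0 d1; rewrite /Pr -(E_const d (gates t) 0).
by apply: E_mono => // l; rewrite ler0n.
Qed.

Lemma Pr_leaf (R : realType) (d : R) n (t : tree n) x :
  gates t = 0%N -> Pr d t x = 0.
Proof.
case: t => [i|b|a b c] //= H; first by rewrite /Pr /ideal /= eqxx.
  by rewrite /Pr /ideal /= eqxx.
lia.
Qed.

Lemma Pr_rn (R : realType) (d : R) n (A B : tree n) x :
  0 <= d -> d <= 1 / 1000 -> Pr d A x <= 1 / 100 -> Pr d B x <= 1 / 100 ->
  Pr d (rn A B) x <= 1 / 100.
Proof.
move=> d0 d1 hA hB.
have d1' : d <= 1 by lra.
set N := Node A B (TC n false).
set M := Node N N N.
have hN : Pr d N x <= 21 / 1000.
  apply: le_trans (@Pr_node1 R d n A B (TC n false) x d0 d1') _.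
  rewrite (@Pr_leaf R d n (TC n false) x) //; lra.
have pN := @Pr_ge0 R d n N x d0 d1'.
have hM : Pr d M x <= 3 / 1000.
  apply: le_trans (@Pr_node2 R d n N N N x d0 d1' erefl erefl) _.
  have : Pr d N x * Pr d N x <= (21 / 1000) * (21 / 1000) by apply: ler_pM.
  lra.
have pM := @Pr_ge0 R d n M x d0 d1'.
apply: le_trans (@Pr_node2 R d n M M M x d0 d1' erefl erefl) _.
have : Pr d M x * Pr d M x <= (3 / 1000) * (3 / 1000) by apply: ler_pM.
lra.
Qed.

Definition good (R : realType) (d : R) n (g : n.-tuple bool -> bool) :=
  exists t : tree n, (forall x, ideal t x = g x) /\ (forall x, Pr d t x <= 1 / 100).


Lemma good_ext (R : realType) (d : R) n (g h : n.-tuple bool -> bool) :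
  (forall x, g x = h x) -> good d g -> good d h.
Proof. by move=> E [t [H1 H2]]; exists t; split => // x; rewrite H1. Qed.

Lemma good_in (R : realType) (d : R) n (i : 'I_n) : good d (fun x => tnth x i).
Proof.
exists (TIn i); split => // x; rewrite Pr_leaf //; lra.
Qed.

Lemma good_const (R : realType) (d : R) n b : good d (fun _ : n.-tuple bool => b).
Proof.
exists (TC n b); split => // x; rewrite Pr_leaf //; lra.
Qed.

Lemma good_nand (R : realType) (d : R) n (g h : n.-tuple bool -> bool) :
  0 <= d -> d <= 1 / 1000 ->
  good d g -> good d h -> good d (fun x => ~~ (g x && h x)).
Proof.
move=> d0 d1 [A [A1 A2]] [B [B1 B2]].
exists (rn A B); split => x; first by rewrite ideal_rn A1 B1.
exact: Pr_rn.
Qed.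


Lemma good_all (R : realType) (d : R) n : 0 <= d -> d <= 1 / 1000 ->
  forall g : n.-tuple bool -> bool, good d g.
Proof.
move=> d0 d1.
have good_ext (g h : n.-tuple bool -> bool) : good d g -> (forall x, g x = h x) -> good d h.
  by move=> Hg E; apply: good_ext Hg.
have Hnot (g : n.-tuple bool -> bool) : good d g -> good d (fun x => ~~ g x).
  move=> Hg; apply: (good_ext _ _ (good_nand d0 d1 Hg Hg)) => x; by rewrite andbb.
have Hand (g h : n.-tuple bool -> bool) : good d g -> good d h -> good d (fun x => g x && h x).
  move=> Hg Hh; apply: (good_ext _ _ (Hnot _ (good_nand d0 d1 Hg Hh))) => x; by rewrite negbK.
have Hor (g h : n.-tuple bool -> bool) : good d g -> good d h -> good d (fun x => g x || h x).
  move=> Hg Hh; apply: (good_ext _ _ (good_nand d0 d1 (Hnot _ Hg) (Hnot _ Hh))) => x.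
  by rewrite -negb_or negbK.
have Hlit (i : 'I_n) bb : good d (fun x : n.-tuple bool => tnth x i == bb).
  case: bb.
    by apply: (good_ext _ _ (good_in d i)) => x; rewrite eqb_id.
  by apply: (good_ext _ _ (Hnot _ (good_in d i))) => x; rewrite eqbF_neg.
have Hall (a : n.-tuple bool) (l : seq 'I_n) :
    good d (fun x : n.-tuple bool => all (fun i => tnth x i == tnth a i) l).
  elim: l => [|i l IH] /=; first exact: good_const.
  exact: Hand.
have Heq (a : n.-tuple bool) : good d (fun x : n.-tuple bool => x == a).
  apply: (good_ext _ _ (Hall a (enum 'I_n))) => x.
  rewrite eqEtuple; apply/allP/forallP => H i; first by apply: H; rewrite mem_enum.
  by move=> _; apply: H.
have Hmem (s : seq (n.-tuple bool)) : good d (fun x => x \in s).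
  elim: s => [|a s IH] /=.
    by apply: (good_ext _ _ (@good_const R d n false)) => x; rewrite in_nil.
  by apply: (good_ext _ _ (Hor _ _ (Heq a) IH)) => x; rewrite in_cons.
move=> g.
apply: (good_ext _ _ (Hmem [seq a <- enum {: n.-tuple bool} | g a])) => x.
by rewrite mem_filter mem_enum andbT.
Qed.

Lemma output_comp n (a b c : tree n) x z :
  output (compc (Node a b c) 0).1 x z = evalf (Node a b c) x z.
Proof.
have [L [RL [SL VL]]] := @run_comp n x z (Node a b c) 0 [::] erefl.
rewrite /output RL /= -nth_last SL.
move: VL; rewrite /= => VL.
have -> : (gates a + (gates b + (gates c + 1))).-1 = (0 + gates a + gates b + gates c)%N by lia.
rewrite VL; congr (min3 _ _ _ (+) _); try (by apply: evalf_ext => k _; rewrite add0n).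
Qed.

Theorem theorem3p2 (R : realType) :
  exists delta0 : R, 0 < delta0 /\
    forall delta : R, 0 <= delta -> delta < delta0 ->
      exists eps : R, 0 < eps /\
        forall (n : nat) (f : n.-tuple bool -> bool),
          exists C : circuit n, circuit_wf C /\
            forall x : n.-tuple bool, err_prob delta C f x <= 1 / 2 - eps.
Proof.
exists (1 / 1000); split; first lra.
move=> d d0 d1.
have d1' : d <= 1 / 1000 by lra.
have d1'' : d <= 1 by lra.
exists (1 / 4); split; first lra.
move=> n f.
have [t [Ht Pt]] := good_all d0 d1' (fun x => ~~ f x).
set T := rn t t.
exists (compc T 0).1; split.
  rewrite /circuit_wf size_comp.
  have := wf_comp T 0; case/andP => -> _.
  by rewrite /T /rn /=; lia.
move=> x.
rewrite /err_prob (E_tuple d (size (compc T 0).1) (fun l => ((output (compc T 0).1 x (fun k => nth false l k) != f x) : nat)%:R)) size_comp.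
have HT : ideal T x = f x by rewrite /T ideal_rn Ht andbb negbK.
have -> : E d (gates T) (fun l => ((output (compc T 0).1 x (fun k => nth false l k) != f x) : nat)%:R)
         = Pr d T x.
  rewrite /Pr; apply: E_ext => l.
  by rewrite /T /rn output_comp -HT.
have := Pr_rn d0 d1' (Pt x) (Pt x).
rewrite -/T; lra.
Qed.
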